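(* Let $h\ge 1$ be an integer and let $P\subset\mathbb R^2$ be a minimal lattice polygon with $\operatorname{ls}_\square(P)=h$. Then $P$ is lattice-equivalent to one of the following: (a) the segment $[(0,0),(h,0)]$; (b) a triangle $\operatorname{conv}\{(0,0),(a,h),(h,b)\}$ with integers $a,b\in[1,h-1]$ and $a+b\ge h$; (c) a quadrilateral $\operatorname{conv}\{(a,0),(0,b),(h,h-c),(h-d,h)\}$ with integers $a,b,c,d\in[1,h-1]$ and $\min\{a,b\}+\min\{c,d\}>h$.
   Context: A lattice polygon is a convex polygon (possibly degenerate, e.g. a segment) all of whose vertices lie in $\mathbb Z^2$. An affine unimodular transformation is $x\mapsto Ax+v$ with $A\in\mathbb Z^{2\times2}$, $\det A=\pm1$, $v\in\mathbb Z^2$; two sets are lattice-equivalent if one is the image of the other under such a map. With $\square=[0,1]^2$, $\operatorname{ls}_\square(P)$ is the smallest $l\ge0$ such that $\varphi(P)\subseteq l\square$ for some affine unimodular $\varphi$. A lattice polygon $P$ with $\operatorname{ls}_\square(P)=h$ is minimal if no lattice polygon properly contained in $P$ has $\operatorname{ls}_\square$ equal to $h$. *)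

(* Defs.v *)
From mathcomp Require Import all_boot all_order all_algebra.
From mathcomp Require Import reals.
Set Implicit Arguments. Unset Strict Implicit. Unset Printing Implicit Defensive.
Import Order.TTheory GRing.Theory Num.Theory.
Local Open Scope ring_scope.

Section Defs.
Variable R : realType.

Definition pt := (R * R)%type.
Definition region := pt -> Prop.

Definition of_lat (v : int * int) : pt := (v.1%:~R, v.2%:~R).

Definition conv (S : seq (int * int)) : region := fun x =>
  exists w : int * int -> R,
    (forall v, 0 <= w v) /\ \sum_(v <- S) w v = 1 /\
    x.1 = \sum_(v <- S) w v * v.1%:~R /\ x.2 = \sum_(v <- S) w v * v.2%:~R.

Definition lattice_polygon (P : region) : Prop :=
  exists S : seq (int * int), S != [::] /\ forall x, P x <-> conv S x.

(* affine unimodular map x |-> A x + v, A = [[a, b], [c, d]], det A = +-1 *)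
Record aff_unimod := AffUnimod {
  am_a : int; am_b : int; am_c : int; am_d : int; am_v1 : int; am_v2 : int }.

Definition unimodular (phi : aff_unimod) : Prop :=
  am_a phi * am_d phi - am_b phi * am_c phi = 1 \/
  am_a phi * am_d phi - am_b phi * am_c phi = -1.

Definition aff_app (phi : aff_unimod) (x : pt) : pt :=
  ((am_a phi)%:~R * x.1 + (am_b phi)%:~R * x.2 + (am_v1 phi)%:~R,
   (am_c phi)%:~R * x.1 + (am_d phi)%:~R * x.2 + (am_v2 phi)%:~R).

Definition img (phi : aff_unimod) (P : region) : region :=
  fun y => exists2 x, P x & y = aff_app phi x.

Definition subregion (P Q : region) : Prop := forall x, P x -> Q x.
Definition same_region (P Q : region) : Prop := forall x, P x <-> Q x.

Definition lattice_equiv (P Q : region) : Prop :=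
  exists phi, unimodular phi /\ same_region (img phi P) Q.

Definition scaled_square (l : R) : region := fun x =>
  0 <= x.1 <= l /\ 0 <= x.2 <= l.

(* ls_box(P) = l : l is the smallest l >= 0 such that phi(P) is contained
   in l * [0,1]^2 for some affine unimodular phi *)
Definition ls_sq_eq (P : region) (l : R) : Prop :=
  0 <= l /\
  (exists phi, unimodular phi /\ subregion (img phi P) (scaled_square l)) /\
  (forall (l' : R) phi, 0 <= l' -> unimodular phi ->
      subregion (img phi P) (scaled_square l') -> l <= l').

Definition minimal_ls (P : region) (h : R) : Prop :=
  lattice_polygon P /\ ls_sq_eq P h /\
  forall Q, lattice_polygon Q -> subregion Q P -> ~ same_region Q P ->
    ~ ls_sq_eq Q h.

End Defs.

(* Main.v *)
Require Import Defs.
From mathcomp Require Import all_boot all_order all_algebra reals.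
From mathcomp Require Import zify ring lra.
From Stdlib Require Import ClassicalEpsilon Classical.
Import Order.TTheory GRing.Theory Num.Theory.
Local Open Scope ring_scope.

Definition dot (f p : int * int) : int := f.1 * p.1 + f.2 * p.2.
Definition rdot {R : realType} (f : int * int) (x : pt R) : R :=
  f.1%:~R * x.1 + f.2%:~R * x.2.

Lemma rdot_lat {R : realType} f p : rdot f (of_lat R p) = (dot f p)%:~R.
Proof. by rewrite /rdot /dot /of_lat /= intrD !intrM. Qed.

Lemma conv_rdot {R : realType} S (x : pt R) f : conv S x ->
  exists w : int * int -> R, (forall v, 0 <= w v) /\ \sum_(v <- S) w v = 1 /\
    rdot f x = \sum_(v <- S) w v * (dot f v)%:~R.
Proof.
case=> w [w0 [w1 [e1 e2]]]; exists w; split=> //; split=> //.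
rewrite /rdot e1 e2 !mulr_sumr -big_split /=; apply: eq_bigr => v _.
rewrite /dot intrD !intrM; ring.
Qed.

Lemma conv_le {R : realType} S (x : pt R) f (c : R) : conv S x ->
  (forall s, s \in S -> (dot f s)%:~R <= c) -> rdot f x <= c.
Proof.
move=> /(@conv_rdot R S x f) [w [w0 [w1 ->]]] H.
apply: (@le_trans _ _ (\sum_(v <- S) w v * c)).
  rewrite big_seq [X in _ <= X]big_seq; apply: ler_sum => v vS.
  by apply: ler_wpM2l => //; apply: H.
by rewrite -mulr_suml w1 mul1r.
Qed.

Lemma conv_ge {R : realType} S (x : pt R) f (c : R) : conv S x ->
  (forall s, s \in S -> c <= (dot f s)%:~R) -> c <= rdot f x.
Proof.
move=> /(@conv_rdot R S x f) [w [w0 [w1 ->]]] H.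
apply: (@le_trans _ _ (\sum_(v <- S) w v * c)); last first.
  rewrite big_seq [X in _ <= X]big_seq; apply: ler_sum => v vS.
  by apply: ler_wpM2l => //; apply: H.
by rewrite -mulr_suml w1 mul1r.
Qed.

Lemma sum_eqR {R : realType} (S : seq (int * int)) s :
  \sum_(v <- S) ((v == s)%:R : R) = (count_mem s S)%:R.
Proof.
elim: S => [|a S IH]; first by rewrite big_nil.
by rewrite big_cons IH /= natrD eq_sym.
Qed.

Lemma conv_in {R : realType} S s : s \in S -> conv S (of_lat R s).
Proof.
move=> sS.
have cp : (0 < count_mem s S)%N by rewrite -has_count has_pred1.
set c : R := (count_mem s S)%:R.
have c0 : c != 0 by rewrite pnatr_eq0 -lt0n.
exists (fun v => (v == s)%:R / c); split.
  by move=> v; apply: divr_ge0 => //; rewrite ler0n.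
have key : forall F : int * int -> R,
    \sum_(v <- S) (v == s)%:R / c * F v = F s.
  move=> F; rewrite (eq_bigr (fun v => (v == s)%:R / c * F s)); last first.
    by move=> v _; case: eqP => [->|]; rewrite ?mul0r.
  by rewrite -mulr_suml -mulr_suml sum_eqR -/c divff // mul1r.
split; first by have := key (fun _ => 1); rewrite (eq_bigr (fun v => (v == s)%:R / c)) // => v _; rewrite mulr1.
by split; rewrite key.
Qed.

Definition cvx {R : realType} (t : R) (x y : pt R) : pt R :=
  (t * x.1 + (1 - t) * y.1, t * x.2 + (1 - t) * y.2).

Lemma conv_convex {R : realType} S (x y : pt R) (t : R) :
  conv S x -> conv S y -> 0 <= t <= 1 -> conv S (cvx t x y).
Proof.
case=> wx [wx0 [wx1 [ex1 ex2]]] [wy [wy0 [wy1 [ey1 ey2]]]] /andP [t0 t1].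
exists (fun v => t * wx v + (1 - t) * wy v); split.
  by move=> v; apply: addr_ge0; apply: mulr_ge0 => //; rewrite subr_ge0.
rewrite /cvx /= big_split /= -!mulr_sumr wx1 wy1; split; first by ring.
rewrite ex1 ex2 ey1 ey2 !mulr_sumr -!big_split /=.
by split; apply: eq_bigr => v _; ring.
Qed.

Lemma conv_sub {R : realType} S T (x : pt R) :
  (forall v, v \in T -> conv S (of_lat R v)) -> conv T x -> conv S x.
Proof.
move=> HT [w [w0 [w1 [e1 e2]]]].
pose Q v (m : int * int -> R) := (forall u, 0 <= m u) /\ \sum_(u <- S) m u = 1 /\
    (of_lat R v).1 = \sum_(u <- S) m u * u.1%:~R /\
    (of_lat R v).2 = \sum_(u <- S) m u * u.2%:~R.
pose mu v := epsilon (inhabits (fun _ : int * int => (0 : R))) (Q v).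
have muP : forall v, v \in T -> Q v (mu v).
  by move=> v vT; apply: (epsilon_spec _ (Q v)); apply: HT.
exists (fun u => \sum_(v <- T) w v * mu v u); split.
  move=> u; rewrite big_seq; apply: sumr_ge0 => v vT.
  by apply: mulr_ge0 => //; case: (muP v vT).
split.
  rewrite exchange_big /= -w1 big_seq [X in _ = X]big_seq.
  apply: eq_bigr => v vT; rewrite -mulr_sumr.
  by case: (muP v vT) => _ [-> _]; rewrite mulr1.
rewrite e1 e2; split.
  under [X in _ = X]eq_bigr do rewrite mulr_suml.
  rewrite exchange_big /= big_seq [X in _ = X]big_seq.
  apply: eq_bigr => v vT.
  case: (muP v vT) => _ [_ [e _]]; rewrite /= in e.
  by under [X in _ = X]eq_bigr do rewrite -mulrA; rewrite -mulr_sumr -e.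
under [X in _ = X]eq_bigr do rewrite mulr_suml.
rewrite exchange_big /= big_seq [X in _ = X]big_seq.
apply: eq_bigr => v vT.
case: (muP v vT) => _ [_ [_ e]]; rewrite /= in e.
by under [X in _ = X]eq_bigr do rewrite -mulrA; rewrite -mulr_sumr -e.
Qed.
Arguments conv_in {R} [S s] _.
Arguments conv_le {R} [S x f c] _ _.
Arguments conv_ge {R} [S x f c] _ _.
Arguments conv_sub {R} [S T x] _ _.
Arguments conv_convex {R} [S x y t] _ _ _.

Definition latapp (phi : aff_unimod) (p : int * int) : int * int :=
  (am_a phi * p.1 + am_b phi * p.2 + am_v1 phi,
   am_c phi * p.1 + am_d phi * p.2 + am_v2 phi).

Lemma aff_lat {R : realType} phi p :
  aff_app phi (of_lat R p) = of_lat R (latapp phi p).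
Proof. by rewrite /aff_app /of_lat /latapp /= !intrD !intrM. Qed.

Definition detu (phi : aff_unimod) : int :=
  am_a phi * am_d phi - am_b phi * am_c phi.

Definition latinv (phi : aff_unimod) (u : int * int) : int * int :=
  (detu phi * (am_d phi * (u.1 - am_v1 phi) - am_b phi * (u.2 - am_v2 phi)),
   detu phi * (am_a phi * (u.2 - am_v2 phi) - am_c phi * (u.1 - am_v1 phi))).

Lemma latinvK phi : unimodular phi -> forall p, latinv phi (latapp phi p) = p.
Proof.
move=> U [p1 p2]; rewrite /latinv /latapp /=.
have E : detu phi * detu phi = 1 by case: U; rewrite /detu => ->.
move: E; clear U; rewrite /detu; case: phi => a b c d v1 v2 /= E.
congr (_, _).
  have -> : (a * d - b * c) * (d * (a * p1 + b * p2 + v1 - v1) - b * (c * p1 + d * p2 + v2 - v2))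
    = ((a * d - b * c) * (a * d - b * c)) * p1 by ring.
  by rewrite E mul1r.
have -> : (a * d - b * c) * (a * (c * p1 + d * p2 + v2 - v2) - c * (a * p1 + b * p2 + v1 - v1))
    = ((a * d - b * c) * (a * d - b * c)) * p2 by ring.
by rewrite E mul1r.
Qed.

Lemma aff_sum {R : realType} (T : seq (int * int)) (w : int * int -> R)
  (F G : int * int -> R) (a b c : R) : \sum_(v <- T) w v = 1 ->
  a * (\sum_(v <- T) w v * F v) + b * (\sum_(v <- T) w v * G v) + c
  = \sum_(v <- T) w v * (a * F v + b * G v + c).
Proof.
move=> w1.
rewrite [X in _ = X](eq_bigr (fun v => a * (w v * F v) + b * (w v * G v) + w v * c));
  last by move=> v _; ring.
by rewrite !big_split /= -!mulr_sumr -mulr_suml w1 mul1r.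
Qed.

Lemma img_conv {R : realType} phi T : unimodular phi ->
  same_region (img phi (conv (R:=R) T)) (conv (map (latapp phi) T)).
Proof.
move=> U y; split.
  case=> x [w [w0 [w1 [e1 e2]]]] ->.
  exists (fun u => w (latinv phi u)); split=> //.
  rewrite !big_map.
  have K : forall F : int * int -> R, \sum_(v <- T) w (latinv phi (latapp phi v)) * F v
      = \sum_(v <- T) w v * F v.
    by move=> F; apply: eq_bigr => v _; rewrite latinvK.
  have Hs : \sum_(v <- T) w (latinv phi (latapp phi v)) = \sum_(v <- T) w v.
    by apply: eq_bigr => v _; rewrite latinvK.
  split; first by rewrite Hs.
  rewrite /aff_app /= e1 e2.
  have K2 := K (fun v => (latapp phi v).1%:~R).
  have K3 := K (fun v => (latapp phi v).2%:~R).
  rewrite /= in K2 K3; rewrite K2 K3 !aff_sum //.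
  by split; apply: eq_bigr => v _; rewrite !intrD !intrM.
case=> w [w0 [w1 [e1 e2]]].
rewrite !big_map in w1 e1 e2.
exists (\sum_(v <- T) w (latapp phi v) * v.1%:~R,
        \sum_(v <- T) w (latapp phi v) * v.2%:~R).
  by exists (fun v => w (latapp phi v)).
rewrite /aff_app /=; case: y e1 e2 => y1 y2 /= -> ->.
rewrite !aff_sum //.
by congr (_, _); apply: eq_bigr => v _; rewrite !intrD !intrM.
Qed.

Definition UB (T : seq (int * int)) (f : int * int) (h : int) :=
  forall p q, p \in T -> q \in T -> dot f p - dot f q <= h.
Definition LBw (T : seq (int * int)) (f : int * int) (h : int) :=
  exists p q, [/\ p \in T, q \in T & h <= dot f p - dot f q].
Definition lin (m : int) (f : int * int) (n : int) (g : int * int) : int * int :=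
  (m * f.1 + n * g.1, m * f.2 + n * g.2).
Definition det2 (f g : int * int) : int := f.1 * g.2 - f.2 * g.1.
Definition cert T f1 f2 h :=
  (det2 f1 f2 = 1 \/ det2 f1 f2 = -1) /\ UB T f1 h /\ UB T f2 h /\
  LBw T f2 h /\ LBw T (lin 1 f2 1 f1) h /\ LBw T (lin 1 f2 (-1) f1) h.

Lemma dot_lin m f n g p : dot (lin m f n g) p = m * dot f p + n * dot g p.
Proof. rewrite /dot /lin /=; ring. Qed.

Lemma width_pos T f1 f2 h m n : 0 <= h -> cert T f1 f2 h -> 0 < n ->
  LBw T (lin m f1 n f2) h.
Proof.
move=> h0 [_ [U1 [U2 [L2 [Lp Lm]]]]] n0.
have [mn|] := boolP (`|m| < n).
  case: L2 => p [q [pT qT d2]]; exists p, q; split=> //.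
  rewrite !dot_lin.
  have a1 := U1 p q pT qT; have a2 := U1 q p qT pT.
  set F1 := dot f1 p - dot f1 q in a1 a2 *; set F2 := dot f2 p - dot f2 q in d2 *.
  have -> : m * dot f1 p + n * dot f2 p - (m * dot f1 q + n * dot f2 q) = m * F1 + n * F2.
    rewrite /F1 /F2; ring.
  have e1 : n * h <= n * F2 by rewrite ler_pM2l.
  have e2 : - (`|m| * h) <= m * F1.
    have : `|m * F1| <= `|m| * h.
      rewrite normrM ler_wpM2l //; rewrite ler_norml; apply/andP; split; lia.
    rewrite ler_norml => /andP [] //.
  have e3 : `|m| * h <= (n - 1) * h by rewrite ler_wpM2r //; lia.
  lia.
rewrite -leNgt => nm.
have [m0|m0] := lerP 0 m.
  case: Lp => p [q [pT qT d]]; exists p, q; split=> //.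
  rewrite !dot_lin in d *.
  have a2 := U2 p q pT qT.
  set F1 := dot f1 p - dot f1 q; set F2 := dot f2 p - dot f2 q.
  have -> : m * dot f1 p + n * dot f2 p - (m * dot f1 q + n * dot f2 q) =
    m * (F1 + F2) - (m - n) * F2 by rewrite /F1 /F2; ring.
  have dd : h <= F1 + F2 by rewrite /F1 /F2; lia.
  have e1 : m * h <= m * (F1 + F2) by rewrite ler_wpM2l.
  have e2 : (m - n) * F2 <= (m - n) * h by rewrite ler_wpM2l //; lia.
  have e3 : h <= n * h by rewrite -[X in X <= _]mul1r ler_wpM2r //; lia.
  have : m * h - (m - n) * h = n * h by ring.
  lia.
case: Lm => p [q [pT qT d]]; exists p, q; split=> //.
rewrite !dot_lin in d *.
have a2 := U2 p q pT qT.
set F1 := dot f1 p - dot f1 q; set F2 := dot f2 p - dot f2 q.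
have -> : m * dot f1 p + n * dot f2 p - (m * dot f1 q + n * dot f2 q) =
  (- m) * (F2 - F1) - (- m - n) * F2 by rewrite /F1 /F2; ring.
have dd : h <= F2 - F1 by rewrite /F1 /F2; lia.
have e1 : (- m) * h <= (- m) * (F2 - F1) by rewrite ler_wpM2l //; lia.
have e2 : (- m - n) * F2 <= (- m - n) * h by rewrite ler_wpM2l //; lia.
have e3 : h <= n * h by rewrite -[X in X <= _]mul1r ler_wpM2r //; lia.
have : (- m) * h - (- m - n) * h = n * h by ring.
lia.
Qed.

Lemma width_nz T f1 f2 h m n : 0 <= h -> cert T f1 f2 h -> n != 0 ->
  LBw T (lin m f1 n f2) h.
Proof.
move=> h0 C nz.
have [n0|n0] := ltrP 0 n; first exact: width_pos.
have n0' : 0 < - n by rewrite oppr_gt0 lt_neqAle nz.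
case: (@width_pos T f1 f2 h (-m) (-n) h0 C n0') => p [q [pT qT d]].
exists q, p; split=> //; rewrite !dot_lin in d *; lia.
Qed.

Lemma decomp f1 f2 g : det2 f1 f2 = 1 \/ det2 f1 f2 = -1 ->
  g = lin (det2 f1 f2 * det2 g f2) f1 (det2 f1 f2 * det2 f1 g) f2.
Proof.
move=> D; have E : det2 f1 f2 * det2 f1 f2 = 1 by case: D => ->.
move: E; case: f1 f2 g {D} => [a b] [c d] [x y]; rewrite /det2 /lin /= => E.
congr (_, _).
  have -> : (a * d - b * c) * (x * d - y * c) * a + (a * d - b * c) * (a * y - b * x) * c
    = ((a * d - b * c) * (a * d - b * c)) * x by ring.
  by rewrite E mul1r.
have -> : (a * d - b * c) * (x * d - y * c) * b + (a * d - b * c) * (a * y - b * x) * d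
  = ((a * d - b * c) * (a * d - b * c)) * y by ring.
by rewrite E mul1r.
Qed.

Lemma cert_lb {R : realType} T f1 f2 (h : nat) : cert T f1 f2 h%:Z ->
  forall (l' : R) phi, 0 <= l' -> unimodular phi ->
  subregion (img phi (conv T)) (scaled_square l') -> h%:R <= l'.
Proof.
move=> C l' phi l0 U sub.
set g1 := (am_a phi, am_b phi); set g2 := (am_c phi, am_d phi).
have sq : forall p : int * int, p \in T ->
    (0 <= ((dot g1 p + am_v1 phi)%:~R : R) <= l') /\ (0 <= ((dot g2 p + am_v2 phi)%:~R : R) <= l').
  move=> p pT.
  have := sub (aff_app phi (of_lat R p)) (ex_intro2 _ _ (of_lat R p) (@conv_in R T p pT) erefl).
  by rewrite aff_lat /scaled_square /of_lat /latapp /dot /=.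
have fin : forall (g : int * int) (v : int), (forall p : int * int, p \in T -> 0 <= ((dot g p + v)%:~R : R) <= l') ->
    LBw T g h%:Z -> h%:R <= l' :> R.
  move=> g v H [p [q [pT qT d]]].
  have /andP [_ Hp] := H p pT; have /andP [Hq _] := H q qT.
  have d' : (h%:Z)%:~R <= (dot g p - dot g q)%:~R :> R by rewrite ler_int.
  rewrite intrB in d'; rewrite intrD in Hp Hq.
  have -> : h%:R = (h%:Z)%:~R :> R by [].
  lra.
have D := C.1.
have hz : (0 <= h%:Z) by [].
have [n1|n1] := eqVneq (det2 f1 f2 * det2 f1 g1) 0; last first.
  apply: (fin g1 (am_v1 phi)); first by move=> p /sq [].
  by rewrite (decomp f1 f2 g1 D); apply: width_nz.
have [n2|n2] := eqVneq (det2 f1 f2 * det2 f1 g2) 0; last first.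
  apply: (fin g2 (am_v2 phi)); first by move=> p /sq [].
  by rewrite (decomp f1 f2 g2 D); apply: width_nz.
exfalso.
have E1 := decomp f1 f2 g1 D; have E2 := decomp f1 f2 g2 D.
rewrite n1 in E1; rewrite n2 in E2.
have : det2 g1 g2 = 0.
  rewrite E1 E2 /det2 /lin /=; ring.
rewrite /det2 /= => e.
by case: U; rewrite e.
Qed.

Set Implicit Arguments. Unset Strict Implicit. Unset Printing Implicit Defensive.

Lemma min_cert {R : realType} (P : region R) S (h : nat) T f1 f2 :
  minimal_ls P h%:R -> (forall x, P x <-> conv S x) -> T != [::] ->
  (forall v, v \in T -> conv S (of_lat R v)) -> cert T f1 f2 h%:Z ->
  same_region (conv T) P.
Proof.
move=> [_ [[h0 [[phi [U sub]] _]] mnl]] PS Tn TS C.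
apply: NNPP => ns.
have TP : subregion (conv T) P by move=> x xT; apply/PS; exact: (@conv_sub R S T x TS xT).
apply: (mnl (conv T)) => //.
  by exists T; split.
split=> //; split.
  exists phi; split=> // y [x xT ->]; apply: sub; exists x => //; exact: TP.
by move=> l' psi l0 U'; apply: cert_lb C l' psi l0 U'.
Qed.

Lemma argmin_ex (S : seq (int * int)) f : S != [::] ->
  exists2 s0, s0 \in S & forall s, s \in S -> dot f s0 <= dot f s.
Proof.
elim: S => [//|a S IH] _.
case: (eqVneq S [::]) => [->|Sn].
  by exists a; rewrite ?mem_head // => s; rewrite inE => /eqP ->.
case: (IH Sn) => b bS Hb.
have [ab|ba] := lerP (dot f a) (dot f b).
  exists a; first exact: mem_head.
  move=> s; rewrite inE => /orP [/eqP ->//|sS]; exact: le_trans ab (Hb s sS).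
exists b; first by rewrite inE bS orbT.
move=> s; rewrite inE => /orP [/eqP ->|sS]; [exact: ltW | exact: Hb].
Qed.

Lemma argmax_ex (S : seq (int * int)) f : S != [::] ->
  exists2 s0, s0 \in S & forall s, s \in S -> dot f s <= dot f s0.
Proof.
move=> Sn; case: (@argmin_ex S (- f.1, - f.2) Sn) => s0 s0S H.
exists s0 => // s sS; have := H s sS; rewrite /dot /=; lia.
Qed.

Lemma UB_conv {R : realType} S f (h : int) (x y : pt R) :
  UB S f h -> conv S x -> conv S y -> rdot f x - rdot f y <= h%:~R.
Proof.
move=> U cx cy.
have : rdot f x <= rdot f y + h%:~R.
  apply: (@conv_le R S x f) => // s sS.
  have : (dot f s)%:~R - h%:~R <= rdot f y :> R.
    apply: (@conv_ge R S y f) => // s' s'S.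
    by rewrite -intrB ler_int; have := U s s' sS s'S; lia.
  lra.
lra.
Qed.

Lemma UB_lat {R : realType} S f (h : int) p q :
  UB S f h -> conv S (of_lat R p) -> conv S (of_lat R q) -> dot f p - dot f q <= h.
Proof.
move=> U cp cq; have := UB_conv U cp cq.
by rewrite !rdot_lat -intrB ler_int.
Qed.

Lemma UB_sub {R : realType} S T f (h : int) :
  UB S f h -> (forall v, v \in T -> conv S (of_lat R v)) -> UB T f h.
Proof. by move=> U TS p q pT qT; apply: (UB_lat (R:=R) U); apply: TS. Qed.

Definition wd (S : seq (int * int)) (f : int * int) : nat :=
  \max_(p <- S) \max_(q <- S) absz (dot f p - dot f q).

Lemma wd_ge S f p q : p \in S -> q \in S -> (absz (dot f p - dot f q) <= wd S f)%N.
Proof.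
move=> pS qS.
apply: (leq_trans _ (@leq_bigmax_seq _ S xpredT
   (fun p => \max_(q <- S) absz (dot f p - dot f q)) p pS erefl)).
exact: (@leq_bigmax_seq _ S xpredT (fun q => absz (dot f p - dot f q)) q qS erefl).
Qed.

Lemma wd_le S f n : (forall p q, p \in S -> q \in S -> absz (dot f p - dot f q) <= n)%N ->
  (wd S f <= n)%N.
Proof.
move=> H; apply/bigmax_leqP_seq => p pS _; apply/bigmax_leqP_seq => q qS _.
exact: H.
Qed.

Lemma UB_wd S f : UB S f (wd S f)%:Z.
Proof. move=> p q pS qS; have := wd_ge f pS qS; lia. Qed.

Lemma wd_UB S f (h : nat) : UB S f h%:Z -> (wd S f <= h)%N.
Proof. move=> U; apply: wd_le => p q pS qS; have := U p q pS qS; have := U q p qS pS; lia. Qed.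

Lemma LBw_wd S f (h : nat) : S != [::] -> (h <= wd S f)%N -> LBw S f h%:Z.
Proof.
move=> Sn hw; apply: NNPP => nL.
have H : forall p q, p \in S -> q \in S -> dot f p - dot f q < h%:Z.
  move=> p q pS qS; rewrite ltNge; apply/negP => hp; apply: nL; exists p, q.
  by rewrite pS qS hp.
clear nL; case: h hw H => [|h] hw H.
  case: S Sn H {hw} => [//|a S] _ H; have := H a a (mem_head _ _) (mem_head _ _); lia.
have : (wd S f <= h)%N.
  apply: wd_le => p q pS qS; have := H p q pS qS; have := H q p qS pS; lia.
lia.
Qed.

Set Implicit Arguments. Unset Strict Implicit. Unset Printing Implicit Defensive.

Lemma ex_minP (Q : nat -> Prop) : (exists n, Q n) ->
  exists n, Q n /\ forall m, Q m -> (n <= m)%N.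
Proof.
move=> [n Qn]; elim/ltn_ind: n Qn => n IH Qn.
case: (classic (exists m, Q m /\ (m < n)%N)) => [[m [Qm lt]]|nm].
  exact: IH lt Qm.
exists n; split=> // m Qm; rewrite leqNgt; apply/negP => lt; apply: nm; by exists m.
Qed.

Definition unim2 f g := det2 f g = 1 \/ det2 f g = -1.

Lemma det2_lin2 g1 g2 k : det2 g1 (lin 1 g2 k g1) = det2 g1 g2.
Proof. rewrite /det2 /lin /=; ring. Qed.
Lemma det2_lin1 g1 g2 k : det2 (lin 1 g1 k g2) g2 = det2 g1 g2.
Proof. rewrite /det2 /lin /=; ring. Qed.
Lemma det2_sym g1 g2 : det2 g2 g1 = - det2 g1 g2.
Proof. rewrite /det2; ring. Qed.

Lemma reduced S (h : nat) r1 r2 : S != [::] -> unim2 r1 r2 ->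
  UB S r1 h%:Z -> UB S r2 h%:Z ->
  (forall g1 g2, unim2 g1 g2 -> UB S g1 (h%:Z - 1) -> UB S g2 (h%:Z - 1) -> False) ->
  exists G1 G2, cert S G1 G2 h%:Z.
Proof.
move=> Sn D0 U1 U2 noh.
pose Good n := exists g1 g2, [/\ unim2 g1 g2, (wd S g1 <= h)%N, (wd S g2 <= h)%N &
   (wd S g1 + wd S g2)%N = n].
have [n0 [[g1 [g2 [D w1 w2 e]]] mn]] : exists n, Good n /\ forall m, Good m -> (n <= m)%N.
  by apply: ex_minP; exists (wd S r1 + wd S r2)%N, r1, r2; split => //; apply: wd_UB.
have big2 : forall k, (wd S g2 <= wd S (lin 1 g2 k g1))%N.
  move=> k; case: (leqP (wd S (lin 1 g2 k g1)) h) => [le|lt]; last by lia.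
  have := mn (wd S g1 + wd S (lin 1 g2 k g1))%N.
  have G : Good (wd S g1 + wd S (lin 1 g2 k g1))%N.
    by exists g1, (lin 1 g2 k g1); split => //; rewrite /unim2 det2_lin2.
  move=> /(_ G); lia.
have big1 : forall k, (wd S g1 <= wd S (lin 1 g1 k g2))%N.
  move=> k; case: (leqP (wd S (lin 1 g1 k g2)) h) => [le|lt]; last by lia.
  have := mn (wd S (lin 1 g1 k g2) + wd S g2)%N.
  have G : Good (wd S (lin 1 g1 k g2) + wd S g2)%N.
    by exists (lin 1 g1 k g2), g2; split => //; rewrite /unim2 det2_lin1.
  move=> /(_ G); lia.
have UBw : forall g, (wd S g <= h)%N -> UB S g h%:Z.
  move=> g le p q pS qS; have := @UB_wd S g p q pS qS; lia.
have [e2|ne2] := eqVneq (wd S g2) h.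
  exists g1, g2; split=> //; split; first exact: UBw.
  split; first exact: UBw.
  split; first by apply: LBw_wd => //; rewrite e2.
  split; apply: LBw_wd => //; rewrite -e2; exact: big2.
have [e1|ne1] := eqVneq (wd S g1) h.
  exists g2, g1; split; first by rewrite /unim2 det2_sym; case: D => ->; [right|left].
  split; first exact: UBw.
  split; first exact: UBw.
  split; first by apply: LBw_wd => //; rewrite e1.
  split; apply: LBw_wd => //; rewrite -e1; exact: big1.
exfalso; apply: (noh g1 g2 D).
  move=> p q pS qS; have := @UB_wd S g1 p q pS qS; lia.
move=> p q pS qS; have := @UB_wd S g2 p q pS qS; lia.
Qed.

Set Implicit Arguments. Unset Strict Implicit. Unset Printing Implicit Defensive.

Lemma ls_upper {R : realType} (P : region R) S (h : nat) :
  ls_sq_eq P h%:R -> (forall x, P x <-> conv S x) ->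
  exists r1 r2, [/\ unim2 r1 r2, UB S r1 h%:Z & UB S r2 h%:Z].
Proof.
move=> [_ [[phi [U sub]] _]] PS.
have sq : forall p, p \in S ->
    (0 <= ((dot (am_a phi, am_b phi) p + am_v1 phi)%:~R : R) <= h%:R) /\
    (0 <= ((dot (am_c phi, am_d phi) p + am_v2 phi)%:~R : R) <= h%:R).
  move=> p pS.
  have := sub (aff_app phi (of_lat R p)) (ex_intro2 _ _ (of_lat R p) ((PS _).2 (conv_in pS)) erefl).
  by rewrite aff_lat /scaled_square /of_lat /latapp /dot /=.
have hz : h%:R = (h%:Z)%:~R :> R by [].
exists (am_a phi, am_b phi), (am_c phi, am_d phi); split.
- by rewrite /unim2 /det2 /=.
- move=> p q pS qS; have [/andP [_ a1] _] := sq p pS; have [/andP [a2 _] _] := sq q qS.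
  rewrite hz ler_int in a1; rewrite ler0z in a2; lia.
- move=> p q pS qS; have [_ /andP [_ a1]] := sq p pS; have [_ /andP [a2 _]] := sq q qS.
  rewrite hz ler_int in a1; rewrite ler0z in a2; lia.
Qed.

Lemma ls_lower {R : realType} (P : region R) S (h : nat) g1 g2 :
  ls_sq_eq P h%:R -> (forall x, P x <-> conv S x) -> S != [::] -> (1 <= h)%N ->
  unim2 g1 g2 -> UB S g1 (h%:Z - 1) -> UB S g2 (h%:Z - 1) -> False.
Proof.
move=> [_ [_ low]] PS Sn h1 D U1 U2.
case: (argmin_ex g1 Sn) => s1 s1S H1.
case: (argmin_ex g2 Sn) => s2 s2S H2.
pose phi := AffUnimod g1.1 g1.2 g2.1 g2.2 (- dot g1 s1) (- dot g2 s2).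
have l0 : 0 <= ((h%:Z - 1)%:~R : R) by rewrite ler0z; lia.
have Uphi : unimodular phi by [].
have := low _ phi l0 Uphi.
have sub : subregion (img phi P) (scaled_square ((h%:Z - 1)%:~R : R)).
  move=> y [x /PS xS ->].
  have B : forall g s0, s0 \in S -> (forall s, s \in S -> dot g s0 <= dot g s) ->
      UB S g (h%:Z - 1) ->
      0 <= rdot g x - (dot g s0)%:~R <= ((h%:Z - 1)%:~R : R).
    move=> g s0 s0S Hs0 Ug; apply/andP; split.
      rewrite subr_ge0; apply: (conv_ge xS) => s sS; rewrite ler_int; exact: Hs0.
    rewrite lerBlDr -intrD; apply: (conv_le xS) => s sS; rewrite ler_int.
    have := Ug s s0 sS s0S; lia.
  have := B g1 s1 s1S H1 U1; have := B g2 s2 s2S H2 U2.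
  rewrite /scaled_square /aff_app /rdot /phi /= !intrN => b2 b1.
  by split; [move: b1 | move: b2]; rewrite addrC.
move=> /(_ sub).
have -> : h%:R = (h%:Z)%:~R :> R by [].
rewrite ler_int; lia.
Qed.

Lemma rdot_inj {R : realType} f g (x y : pt R) : unim2 f g ->
  rdot f x = rdot f y -> rdot g x = rdot g y -> x = y.
Proof.
move=> D; case: x y => x1 x2 [y1 y2]; rewrite /rdot /= => E1 E2.
have dz : ((det2 f g)%:~R : R) != 0 by case: D => ->; rewrite ?intrN ?oppr_eq0 intr_eq0.
have dd : ((det2 f g)%:~R : R) = f.1%:~R * g.2%:~R - f.2%:~R * g.1%:~R.
  by rewrite /det2 intrB !intrM.
have e1 : ((det2 f g)%:~R : R) * (x1 - y1) = 0.
  rewrite dd.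
  have -> : (f.1%:~R * g.2%:~R - f.2%:~R * g.1%:~R) * (x1 - y1) =
    g.2%:~R * (f.1%:~R * x1 + f.2%:~R * x2 - (f.1%:~R * y1 + f.2%:~R * y2))
    - f.2%:~R * (g.1%:~R * x1 + g.2%:~R * x2 - (g.1%:~R * y1 + g.2%:~R * y2)) :> R by ring.
  by rewrite E1 E2 !subrr !mulr0 subrr.
have e2 : ((det2 f g)%:~R : R) * (x2 - y2) = 0.
  rewrite dd.
  have -> : (f.1%:~R * g.2%:~R - f.2%:~R * g.1%:~R) * (x2 - y2) =
    f.1%:~R * (g.1%:~R * x1 + g.2%:~R * x2 - (g.1%:~R * y1 + g.2%:~R * y2))
    - g.1%:~R * (f.1%:~R * x1 + f.2%:~R * x2 - (f.1%:~R * y1 + f.2%:~R * y2)) :> R by ring.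
  by rewrite E1 E2 !subrr !mulr0 subrr.
move: e1 e2 => /eqP; rewrite mulf_eq0 (negbTE dz) subr_eq0 /= => /eqP ->.
by move=> /eqP; rewrite mulf_eq0 (negbTE dz) subr_eq0 /= => /eqP ->.
Qed.

Lemma rdot_cvx {R : realType} f (t : R) x y :
  rdot f (cvx t x y) = t * rdot f x + (1 - t) * rdot f y.
Proof. rewrite /rdot /cvx /=; ring. Qed.

Set Implicit Arguments. Unset Strict Implicit. Unset Printing Implicit Defensive.

Definition dD (G1 G2 p : int * int) : int := dot G1 p - dot G2 p.

Lemma core {R : realType} (P : region R) S (h : nat) G1 G2 B U V V' :
  minimal_ls P h%:R -> (forall x, P x <-> conv S x) -> (1 <= h)%N -> unim2 G1 G2 ->
  UB S G1 h%:Z -> UB S G2 h%:Z ->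
  B \in S -> U \in S -> V \in S -> V' \in S ->
  dot G2 U - dot G2 B = h%:Z -> (forall s, s \in S -> dot G2 B <= dot G2 s) ->
  dot G1 B <= dot G1 U ->
  h%:Z + 1 <= dD G1 G2 V - dD G1 G2 V' -> dD G1 G2 B + 1 <= dD G1 G2 V -> False.
Proof.
move=> M PS h1 D U1 U2 BS US VS V'S eU Bmin BU DV DB.
have h0 : (0 < h%:R :> R) by rewrite ltr0n; lia.
set d := det2 G1 G2.
have dd : d * d = 1 by rewrite /d; case: D => ->.
pose e : int * int := (d * G2.2, - (d * G2.1)).
have e1 : dot G1 e = 1 by rewrite /dot /e /= -dd /d /det2; ring.
have e2 : dot G2 e = 0 by rewrite /dot /e /=; ring.
pose z : int * int := (V.1 - e.1, V.2 - e.2).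
have z1 : dot G1 z = dot G1 V - 1 by rewrite -e1 /dot /z /=; ring.
have z2 : dot G2 z = dot G2 V by rewrite -[RHS]subr0 -e2 /dot /z /=; ring.
have Sconv : forall s, s \in S -> conv S (of_lat R s) by move=> s sS; exact: conv_in.
have zS : conv S (of_lat R z).
  set t := dot G2 V - dot G2 B.
  have t0 : 0 <= t by rewrite /t subr_ge0; apply: Bmin.
  have th : t <= h%:Z by rewrite /t; apply: U2.
  set tau : R := t%:~R / h%:R.
  have tau0 : 0 <= tau <= 1.
    apply/andP; split; first by apply: divr_ge0; rewrite ?ler0z // ler0n.
    rewrite ler_pdivrMr // mul1r.
    have -> : h%:R = (h%:Z)%:~R :> R by [].
    by rewrite ler_int.
  set Z1 := cvx tau (of_lat R U) (of_lat R B).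
  have Z1S : conv S Z1 by apply: conv_convex => //; apply: Sconv.
  have Z1y : rdot G2 Z1 = (dot G2 V)%:~R.
    rewrite rdot_cvx !rdot_lat.
    have : (dot G2 U)%:~R = (dot G2 B)%:~R + h%:R :> R.
      have -> : dot G2 U = dot G2 B + h%:Z by lia.
      by rewrite intrD.
    move=> ->.
    have -> : (dot G2 V)%:~R = (dot G2 B)%:~R + t%:~R :> R by rewrite /t intrB; ring.
    rewrite /tau; field; rewrite pnatr_eq0; lia.
  have dX := U1 U B US BS.
  set kap : R := (dot G1 V)%:~R - rdot G1 Z1.
  have kap1 : 1 <= kap.
    rewrite /kap rdot_cvx !rdot_lat.
    have : tau * ((dot G1 U)%:~R - (dot G1 B)%:~R) <= t%:~R.
      rewrite /tau -intrB mulrAC ler_pdivrMr // ler_wpM2l ?ler0z //.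
      have -> : h%:R = (h%:Z)%:~R :> R by [].
      by rewrite ler_int.
    have i1 : 1 <= dot G1 V - dot G1 B - t by move: DB; rewrite /dD /t; lia.
    have : (1 : R) <= (dot G1 V)%:~R - (dot G1 B)%:~R - t%:~R by rewrite -!intrB ler1z.
    lra.
  set lam : R := kap^-1.
  have lam0 : 0 <= lam <= 1.
    apply/andP; split; first by rewrite invr_ge0; lra.
    rewrite invf_le1; lra.
  have -> : of_lat R z = cvx lam Z1 (of_lat R V).
    apply: (rdot_inj D).
      rewrite rdot_cvx !rdot_lat z1 intrB.
      have kp : 0 < kap by apply: lt_le_trans ltr01 kap1.
      have kn : kap != 0 by rewrite gt_eqF.
      have : lam * kap = 1 by rewrite /lam mulVf.
      rewrite /kap; move: (rdot G1 Z1) => r; move: ((dot G1 V)%:~R : R) => a.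
      move=> E; have -> : lam * r + (1 - lam) * a = a - lam * (a - r) by ring.
      by rewrite E.
    by rewrite rdot_cvx !rdot_lat z2 Z1y; ring.
  exact: conv_convex Z1S (Sconv V VS) lam0.
pose T1 := [:: B; U; z; V'].
have T1S : forall v, v \in T1 -> conv S (of_lat R v).
  move=> v; rewrite !inE => /orP [/eqP ->|/orP [/eqP ->|/orP [/eqP ->|/eqP ->]]] //; exact: Sconv.
have C : cert T1 G1 G2 h%:Z.
  split=> //; split; first exact: (UB_sub (R:=R) U1 T1S).
  split; first exact: (UB_sub (R:=R) U2 T1S).
  split; first by exists U, B; rewrite !inE !eqxx ?orbT eU.
  split.
    by exists U, B; rewrite !inE !eqxx ?orbT; split=> //; rewrite !dot_lin; lia.
  exists V', z; rewrite !inE !eqxx ?orbT; split=> //; rewrite !dot_lin z1 z2.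
  move: DV; rewrite /dD; lia.
have T1P := min_cert (T:=T1) M PS isT T1S C.
have VT : conv T1 (of_lat R V) by apply/T1P/PS; exact: Sconv.
have dU := U1 U B US BS.
have bound : forall s, s \in T1 ->
    ((dot (lin 1 G1 (-1) G2) s)%:~R : R) <= (dD G1 G2 V - 1)%:~R.
  move=> s; rewrite ler_int dot_lin !inE => /orP [/eqP ->|/orP [/eqP ->|/orP [/eqP ->|/eqP ->]]];
    move: DB DV; rewrite /dD ?z1 ?z2; lia.
have := conv_le VT bound.
rewrite rdot_lat ler_int dot_lin /dD; lia.
Qed.

Definition vneg (f : int * int) : int * int := (- f.1, - f.2).
Lemma dot_vneg f p : dot (vneg f) p = - dot f p.
Proof. rewrite /dot /vneg /=; ring. Qed.
Lemma unim2_neg f g : unim2 f g -> unim2 (vneg f) (vneg g).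
Proof.
by rewrite /unim2 /det2 /vneg /=; have -> : forall a b c d : int, - a * - b - - c * - d = a * b - c * d by move=> *; ring.
Qed.
Lemma UB_neg S f h : UB S f h -> UB S (vneg f) h.
Proof. by move=> U p q pS qS; rewrite !dot_vneg; have := U q p qS pS; lia. Qed.

Lemma claim {R : realType} (P : region R) S (h : nat) G1 G2 B U :
  minimal_ls P h%:R -> (forall x, P x <-> conv S x) -> (1 <= h)%N -> unim2 G1 G2 ->
  UB S G1 h%:Z -> UB S G2 h%:Z -> B \in S -> U \in S ->
  dot G2 U - dot G2 B = h%:Z -> (forall s, s \in S -> dot G2 B <= dot G2 s) ->
  dot G1 B <= dot G1 U -> UB S (lin 1 G2 (-1) G1) h%:Z.
Proof.
move=> M PS h1 D U1 U2 BS US eU Bmin BU p q pS qS.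
rewrite leNgt; apply/negP => hp; rewrite !dot_lin in hp.
have DV : h%:Z + 1 <= dD G1 G2 q - dD G1 G2 p by rewrite /dD; lia.
have [DB|DB] := lerP (dD G1 G2 B + 1) (dD G1 G2 q).
  exact: (core M PS h1 D U1 U2 BS US qS pS eU Bmin BU DV DB).
have UBmax : forall s, s \in S -> dot G2 s <= dot G2 U.
  by move=> s sS; have := U2 s B sS BS; lia.
have dU := U1 U B US BS.
apply: (core (G1 := vneg G1) (G2 := vneg G2) (B := U) (U := B) (V := p) (V' := q) M PS h1).
- exact: unim2_neg.
- exact: UB_neg.
- exact: UB_neg.
- done. - done. - done. - done.
- by rewrite !dot_vneg; lia.
- by move=> s sS; rewrite !dot_vneg; have := UBmax s sS; lia.
- by rewrite !dot_vneg; lia.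
- by rewrite /dD !dot_vneg; move: DV; rewrite /dD; lia.
- by rewrite /dD !dot_vneg; move: DV DB; rewrite /dD; lia.
Qed.

Set Implicit Arguments. Unset Strict Implicit. Unset Printing Implicit Defensive.

Lemma finish {R : realType} (P : region R) T f g v1 v2 L : unim2 f g ->
  same_region (conv T) P ->
  map (fun p => (dot f p + v1, dot g p + v2)) T = L -> lattice_equiv P (conv L).
Proof.
move=> D TP ML.
have U : unimodular (AffUnimod f.1 f.2 g.1 g.2 v1 v2) by [].
exists (AffUnimod f.1 f.2 g.1 g.2 v1 v2); split=> // y.
have IC := @img_conv R _ T U.
have E : map (latapp (AffUnimod f.1 f.2 g.1 g.2 v1 v2)) T = L.
  by rewrite -ML; apply: eq_map => p.
split.
  case=> x Px ->; rewrite -E; apply/(IC (aff_app _ x)).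
  by exists x => //; apply/TP.
move=> Ly; have : conv (map (latapp (AffUnimod f.1 f.2 g.1 g.2 v1 v2)) T) y by rewrite E.
move=> /(IC y) [x cx ->]; exists x => //; exact/TP.
Qed.

Lemma UB_list S T f h : UB S f h -> all (fun v => v \in S) T -> UB T f h.
Proof. by move=> U /allP A p q pT qT; apply: U; apply: A. Qed.

Lemma list_conv {R : realType} S T : all (fun v => v \in S) T ->
  forall v, v \in T -> conv S (of_lat R v).
Proof. by move=> /allP A v vT; apply: conv_in; apply: A. Qed.

Ltac memt := rewrite !inE ?eqxx ?orbT //.

Definition Concl {R : realType} (P : region R) (h : nat) : Prop :=
  lattice_equiv P (conv (R:=R) [:: (0, 0); (h%:Z, 0)]) \/
  (exists a b : nat,
      [/\ (1 <= a <= h.-1)%N, (1 <= b <= h.-1)%N, (h <= a + b)%N &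
       lattice_equiv P (conv (R:=R) [:: (0, 0); (a%:Z, h%:Z); (h%:Z, b%:Z)])]) \/
  (exists a b c d : nat,
      [/\ (1 <= a <= h.-1)%N, (1 <= b <= h.-1)%N, (1 <= c <= h.-1)%N,
          (1 <= d <= h.-1)%N &
          (h < minn a b + minn c d)%N] /\
       lattice_equiv P (conv (R:=R) [:: (a%:Z, 0); (0, b%:Z);
                                   (h%:Z, h%:Z - c%:Z); (h%:Z - d%:Z, h%:Z)])).

Lemma square {R : realType} (P : region R) S (h : nat) al be (c1 c2 : int) L0 R0 B0 U0 :
  minimal_ls P h%:R -> (forall x, P x <-> conv S x) -> (1 <= h)%N -> unim2 al be ->
  (forall s, s \in S -> 0 <= dot al s + c1 <= h%:Z) ->
  (forall s, s \in S -> 0 <= dot be s + c2 <= h%:Z) ->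
  L0 \in S -> R0 \in S -> B0 \in S -> U0 \in S ->
  dot al L0 + c1 = 0 -> dot al R0 + c1 = h%:Z -> dot be B0 + c2 = 0 -> dot be U0 + c2 = h%:Z ->
  UB S (lin 1 al (-1) be) h%:Z -> Concl P h.
Proof.
move=> M PS h1 D Bx By LS RS BS US xL xR yB yU UD.
have Ua : UB S al h%:Z.
  by move=> p q pS qS; move: (Bx p pS) (Bx q qS) => /andP [? ?] /andP [? ?]; lia.
have Ub : UB S be h%:Z.
  by move=> p q pS qS; move: (By p pS) (By q qS) => /andP [? ?] /andP [? ?]; lia.
have DD : forall p q, p \in S -> q \in S ->
    (dot al p + c1) - (dot be p + c2) - ((dot al q + c1) - (dot be q + c2)) <= h%:Z.
  by move=> p q pS qS; have := UD p q pS qS; rewrite !dot_lin; lia.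
have Dab : unim2 (lin 1 al (-1) be) be by rewrite /unim2 det2_lin1.
have Dba : unim2 be al by rewrite /unim2 det2_sym; case: D => ->; [right|left].
have hz : (1 <= h%:Z) by lia.
case: (classic (exists2 O, O \in S & dot al O + c1 = 0 /\ dot be O + c2 = 0))
  => [[O OS [xO yO]] | noO];
case: (classic (exists2 E, E \in S & dot al E + c1 = h%:Z /\ dot be E + c2 = h%:Z))
  => [[E ES [xE yE]] | noE].
-
  pose T := [:: O; E].
  have TS : all (fun v => v \in S) T by rewrite /= OS ES.
  have C : cert T (lin 1 al (-1) be) be h%:Z.
    split=> //; split; first exact: UB_list UD TS.
    split; first exact: UB_list Ub TS.
    split; first by exists E, O; split; [memt|memt|lia].
    split; first by exists E, O; split; [memt|memt|rewrite !dot_lin; lia].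
    by exists E, O; split; [memt|memt|rewrite !dot_lin; lia].
  have TP := min_cert (T:=T) M PS isT (list_conv TS) C.
  left; apply: (finish (f:=al) (g:=lin 1 be (-1) al) (v1:=c1) (v2:=c2 - c1) _ TP).
    by rewrite /unim2 det2_lin2.
  by rewrite /= !dot_lin; congr [:: (_, _); (_, _)]; lia.
-
  have nR : dot be R0 + c2 <> h%:Z by move=> e; apply: noE; exists R0.
  have nU : dot al U0 + c1 <> h%:Z by move=> e; apply: noE; exists U0.
  move: (Bx U0 US) (By R0 RS) => /andP [? ?] /andP [? ?].
  have := DD R0 U0 RS US => dRU.
  pose T := [:: O; U0; R0].
  have TS : all (fun v => v \in S) T by rewrite /= OS US RS.
  have C : cert T (lin 1 al (-1) be) be h%:Z.
    split=> //; split; first exact: UB_list UD TS.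
    split; first exact: UB_list Ub TS.
    split; first by exists U0, O; split; [memt|memt|lia].
    split; first by exists R0, O; split; [memt|memt|rewrite !dot_lin; lia].
    by exists U0, O; split; [memt|memt|rewrite !dot_lin; lia].
  have TP := min_cert (T:=T) M PS isT (list_conv TS) C.
  right; left; exists (absz (dot al U0 + c1)%R), (absz (dot be R0 + c2)%R); split; try lia.
  apply: (finish (f:=al) (g:=be) (v1:=c1) (v2:=c2) D TP).
  by rewrite /=; congr [:: (_, _); (_, _); (_, _)]; lia.
-
  have nL : dot be L0 + c2 <> 0 by move=> e; apply: noO; exists L0.
  have nB : dot al B0 + c1 <> 0 by move=> e; apply: noO; exists B0.
  move: (Bx B0 BS) (By L0 LS) => /andP [? ?] /andP [? ?].
  have := DD B0 L0 BS LS => dBL.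
  pose T := [:: E; B0; L0].
  have TS : all (fun v => v \in S) T by rewrite /= ES BS LS.
  have C : cert T (lin 1 al (-1) be) be h%:Z.
    split=> //; split; first exact: UB_list UD TS.
    split; first exact: UB_list Ub TS.
    split; first by exists E, B0; split; [memt|memt|lia].
    split; first by exists E, L0; split; [memt|memt|rewrite !dot_lin; lia].
    by exists E, B0; split; [memt|memt|rewrite !dot_lin; lia].
  have TP := min_cert (T:=T) M PS isT (list_conv TS) C.
  right; left; exists (absz (h%:Z - (dot al B0 + c1))%R), (absz (h%:Z - (dot be L0 + c2))%R).
  split; try lia.
  apply: (finish (f:=vneg al) (g:=vneg be) (v1:=h%:Z - c1) (v2:=h%:Z - c2) (unim2_neg D) TP).
  by rewrite /= !dot_vneg; congr [:: (_, _); (_, _); (_, _)]; lia.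
-
  have nL : dot be L0 + c2 <> 0 by move=> e; apply: noO; exists L0.
  have nB : dot al B0 + c1 <> 0 by move=> e; apply: noO; exists B0.
  have nR : dot be R0 + c2 <> h%:Z by move=> e; apply: noE; exists R0.
  have nU : dot al U0 + c1 <> h%:Z by move=> e; apply: noE; exists U0.
  move: (Bx B0 BS) (By L0 LS) (Bx U0 US) (By R0 RS) => /andP [? ?] /andP [? ?] /andP [? ?] /andP [? ?].
  have := DD B0 L0 BS LS => dBL.
  have := DD R0 L0 RS LS => dRL.
  have := DD B0 U0 BS US => dBU.
  have := DD R0 U0 RS US => dRU.
  have [eLR|nLR] := eqVneq (dot be L0 + c2) (dot be R0 + c2).
    pose T := [:: L0; R0].
    have TS : all (fun v => v \in S) T by rewrite /= LS RS.
    have C : cert T be al h%:Z.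
      split=> //; split; first exact: UB_list Ub TS.
      split; first exact: UB_list Ua TS.
      split; first by exists R0, L0; split; [memt|memt|lia].
      split; first by exists R0, L0; split; [memt|memt|rewrite !dot_lin; lia].
      by exists R0, L0; split; [memt|memt|rewrite !dot_lin; lia].
    have TP := min_cert (T:=T) M PS isT (list_conv TS) C.
    left; apply: (finish (f:=al) (g:=be) (v1:=c1) (v2:= - dot be L0) D TP).
    by rewrite /=; congr [:: (_, _); (_, _)]; lia.
  have [eBU|nBU] := eqVneq (dot al B0 + c1) (dot al U0 + c1).
    pose T := [:: B0; U0].
    have TS : all (fun v => v \in S) T by rewrite /= BS US.
    have C : cert T al be h%:Z.
      split=> //; split; first exact: UB_list Ua TS.
      split; first exact: UB_list Ub TS.
      split; first by exists U0, B0; split; [memt|memt|lia].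
      split; first by exists U0, B0; split; [memt|memt|rewrite !dot_lin; lia].
      by exists U0, B0; split; [memt|memt|rewrite !dot_lin; lia].
    have TP := min_cert (T:=T) M PS isT (list_conv TS) C.
    left; apply: (finish (f:=be) (g:=al) (v1:=c2) (v2:= - dot al B0) Dba TP).
    by rewrite /=; congr [:: (_, _); (_, _)]; lia.
  have [eRU|nRU] := eqVneq ((dot be R0 + c2) + (dot al U0 + c1)) h%:Z.
    exfalso.
    pose T := [:: L0; R0; U0].
    have TS : all (fun v => v \in S) T by rewrite /= LS RS US.
    have C : cert T be al h%:Z.
      split=> //; split; first exact: UB_list Ub TS.
      split; first exact: UB_list Ua TS.
      split; first by exists R0, L0; split; [memt|memt|lia].
      split; first by exists R0, L0; split; [memt|memt|rewrite !dot_lin; lia].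
      by exists R0, U0; split; [memt|memt|rewrite !dot_lin; lia].
    have TP := min_cert (T:=T) M PS isT (list_conv TS) C.
    have BT : conv T (of_lat R B0) by apply/TP/PS; exact: conv_in.
    have bound : forall s, s \in T -> ((1 - c2)%:~R : R) <= (dot be s)%:~R.
      by move=> s; rewrite ler_int !inE => /orP [/eqP ->|/orP [/eqP ->|/eqP ->]]; lia.
    by have := conv_ge BT bound; rewrite rdot_lat ler_int; lia.
  have [eBL|nBL] := eqVneq ((dot al B0 + c1) + (dot be L0 + c2)) h%:Z.
    exfalso.
    pose T := [:: L0; R0; B0].
    have TS : all (fun v => v \in S) T by rewrite /= LS RS BS.
    have C : cert T be al h%:Z.
      split=> //; split; first exact: UB_list Ub TS.
      split; first exact: UB_list Ua TS.
      split; first by exists R0, L0; split; [memt|memt|lia].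
      split; first by exists R0, L0; split; [memt|memt|rewrite !dot_lin; lia].
      by exists B0, L0; split; [memt|memt|rewrite !dot_lin; lia].
    have TP := min_cert (T:=T) M PS isT (list_conv TS) C.
    have UT : conv T (of_lat R U0) by apply/TP/PS; exact: conv_in.
    have bound : forall s, s \in T -> ((dot be s)%:~R : R) <= (h%:Z - 1 - c2)%:~R.
      by move=> s; rewrite ler_int !inE => /orP [/eqP ->|/orP [/eqP ->|/eqP ->]]; lia.
    by have := conv_le UT bound; rewrite rdot_lat ler_int; lia.
  pose T := [:: B0; R0; L0; U0].
  have TS : all (fun v => v \in S) T by rewrite /= BS RS LS US.
  have C : cert T (lin 1 al (-1) be) be h%:Z.
    split=> //; split; first exact: UB_list UD TS.
    split; first exact: UB_list Ub TS.
    split; first by exists U0, B0; split; [memt|memt|lia].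
    split; first by exists R0, L0; split; [memt|memt|rewrite !dot_lin; lia].
    by exists U0, B0; split; [memt|memt|rewrite !dot_lin; lia].
  have TP := min_cert (T:=T) M PS isT (list_conv TS) C.
  right; right.
  exists (absz (h%:Z - (dot al B0 + c1))%R), (absz (dot be R0 + c2)%R),
    (absz (h%:Z - (dot be L0 + c2))%R), (absz (dot al U0 + c1)%R).
  split; first by split; lia.
  have Dn : unim2 (vneg al) be.
    by rewrite /unim2 /det2 /vneg /=; move: D; rewrite /unim2 /det2; lia.
  apply: (finish (f:=vneg al) (g:=be) (v1:=h%:Z - c1) (v2:=c2) Dn TP).
  by rewrite /= !dot_vneg; congr [:: (_, _); (_, _); (_, _); (_, _)]; lia.
Qed.

Set Implicit Arguments. Unset Strict Implicit. Unset Printing Implicit Defensive.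

Lemma UB_ext S f g h : (forall p, dot f p = dot g p) -> UB S f h -> UB S g h.
Proof. by move=> E U p q pS qS; rewrite -!E; apply: U. Qed.
Lemma LBw_ext S f g h : (forall p, dot f p = dot g p) -> LBw S f h -> LBw S g h.
Proof. by move=> E [p [q [pS qS d]]]; exists p, q; rewrite -!E. Qed.

Lemma finalize {R : realType} (P : region R) S (h : nat) G1 G2 B U :
  minimal_ls P h%:R -> (forall x, P x <-> conv S x) -> S != [::] -> (1 <= h)%N ->
  unim2 G1 G2 -> UB S G1 h%:Z -> UB S G2 h%:Z -> B \in S -> U \in S ->
  dot G2 U - dot G2 B = h%:Z -> (forall s, s \in S -> dot G2 B <= dot G2 s) ->
  dot G1 B <= dot G1 U -> LBw S (lin 1 G2 (-1) G1) h%:Z -> Concl P h.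
Proof.
move=> M PS Sn h1 D U1 U2 BS US eU Bmin BU Lal.
have UD0 := claim M PS h1 D U1 U2 BS US eU Bmin BU.
set al := lin 1 G2 (-1) G1 in UD0 Lal *.
case: (argmin_ex al Sn) => A0 A0S Amin.
case: Lal => p [q [pS qS dpq]].
have qA := Amin q qS.
have pA := UD0 p A0 pS A0S.
have Dal : unim2 al G2.
  have : det2 al G2 = - det2 G1 G2 by rewrite /al /det2 /lin /=; ring.
  by rewrite /unim2 => ->; case: D => ->; [right|left].
apply: (square (al:=al) (be:=G2) (c1:= - dot al A0) (c2:= - dot G2 B)
          (L0:=A0) (R0:=p) (B0:=B) (U0:=U) M PS h1 Dal) => //.
- by move=> s sS; have := Amin s sS; have := UD0 s A0 sS A0S; lia.
- by move=> s sS; have := Bmin s sS; have := U2 s B sS BS; lia.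
all: try lia.
apply: (UB_ext (f := vneg G1)); last exact: UB_neg.
by move=> s; rewrite dot_vneg !dot_lin; lia.
Qed.

Theorem mainTheorem8 (R : realType) (h : nat) (P : region R) :
  (1 <= h)%N -> minimal_ls P h%:R ->
  lattice_equiv P (conv (R:=R) [:: (0, 0); (h%:Z, 0)]) \/
  (exists a b : nat,
      [/\ (1 <= a <= h.-1)%N, (1 <= b <= h.-1)%N, (h <= a + b)%N &
       lattice_equiv P (conv (R:=R) [:: (0, 0); (a%:Z, h%:Z); (h%:Z, b%:Z)])]) \/
  (exists a b c d : nat,
      [/\ (1 <= a <= h.-1)%N, (1 <= b <= h.-1)%N, (1 <= c <= h.-1)%N,
          (1 <= d <= h.-1)%N &
          (h < minn a b + minn c d)%N] /\
       lattice_equiv P (conv (R:=R) [:: (a%:Z, 0); (0, b%:Z);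
                                   (h%:Z, h%:Z - c%:Z); (h%:Z - d%:Z, h%:Z)])).
Proof.
move=> h1 M; have M' := M.
case: M' => [[S [Sn PS]] [LS _]].
case: (ls_upper LS PS) => r1 [r2 [D0 U1 U2]].
have noh : forall g1 g2, unim2 g1 g2 -> UB S g1 (h%:Z - 1) -> UB S g2 (h%:Z - 1) -> False.
  by move=> g1 g2 D Ug1 Ug2; apply: (ls_lower LS PS Sn h1 D Ug1 Ug2).
case: (reduced Sn D0 U1 U2 noh) => G1 [G2 [D [UG1 [UG2 [L2 [Lp Lm]]]]]].
case: (argmin_ex G2 Sn) => B BS Bmin.
case: L2 => U [q [US qS dUq]].
have := Bmin q qS; have := UG2 U B US BS => ? ?.
have eU : dot G2 U - dot G2 B = h%:Z by lia.
have [BU|UB'] := lerP (dot G1 B) (dot G1 U).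
  exact: (finalize M PS Sn h1 D UG1 UG2 BS US eU Bmin BU Lm).
apply: (finalize (G1 := vneg G1) (G2 := G2) M PS Sn h1 _ (UB_neg UG1) UG2 BS US eU Bmin).
- move: D; rewrite /unim2 /det2 /vneg /=.
  have -> : forall a b c d : int, - a * b - - c * d = - (a * b - c * d) by move=> *; ring.
  by case=> ->; [right|left].
- by rewrite !dot_vneg; lia.
- apply: (LBw_ext (f := lin 1 G2 1 G1)) => // s.
  by rewrite !dot_lin dot_vneg; lia.
Qed.
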